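(* Let $M\ge3$ and $N\ge1$ be integers and let $f_0,f_1,f_2,f_3:\mathbb{Z}_M\to\mathbb{Z}_N$ be four distinct functions forming a totally indistinguishable set. Then for each $x\in\mathbb{Z}_M$ exactly one of the following holds: (type 1) $f_0(x)=f_1(x)=f_2(x)=f_3(x)$; (type 2) $f_0(x)=f_1(x)\neq f_2(x)=f_3(x)$; (type 3) $f_0(x)=f_2(x)\neq f_1(x)=f_3(x)$; (type 4) $f_0(x)=f_3(x)\neq f_1(x)=f_2(x)$. Let $N_i$ be the number of $x\in\mathbb{Z}_M$ of type $i$, and let $\Gamma$ be the $4\times4$ matrix with $\Gamma_{j'j}=\#\{x\in\mathbb{Z}_M: f_{j'}(x)=f_j(x)\}$. Then $\det\Gamma=16(M+N_1)N_2N_3N_4$, and the standard oracle operators $U_{f_0},U_{f_1},U_{f_2},U_{f_3}$ are unambiguously distinguishable if and only if $N_2>0$, $N_3>0$ and $N_4>0$.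
   Context: A set $\sigma$ of functions $\mathbb{Z}_M\to\mathbb{Z}_N$ is totally indistinguishable if for every $x\in\mathbb{Z}_M$ and every $f\in\sigma$ there exists $f'\in\sigma$ with $f'\neq f$ and $f'(x)=f(x)$. For $f:\mathbb{Z}_M\to\mathbb{Z}_N$ the standard oracle operator is the unitary $U_f$ on $\mathcal{H}_M\otimes\mathcal{H}_N$ (with orthonormal bases $\{|x\rangle\}_{x\in\mathbb{Z}_M}$, $\{|y\rangle\}_{y\in\mathbb{Z}_N}$) given by $U_f|x\rangle\otimes|y\rangle=|x\rangle\otimes|y\oplus f(x)\rangle$, $\oplus$ being addition mod $N$. A finite list of unitary operators $W_1,\ldots,W_K$ on a finite-dimensional Hilbert space $\mathcal{H}$ is called unambiguously distinguishable if there exist a finite-dimensional ancilla space $\mathcal{H}_A$ and a unit vector $|\psi\rangle\in\mathcal{H}\otimes\mathcal{H}_A$ such that the vectors $(W_j\otimes\mathbb{1}_A)|\psi\rangle$ are linearly independent. *)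

(* Defs.v *)
From HB Require Import structures.
From mathcomp Require Import all_boot all_order all_algebra.
From mathcomp Require Import complex.
From mathcomp Require Import reals.
Set Implicit Arguments. Unset Strict Implicit. Unset Printing Implicit Defensive.
Import Order.TTheory GRing.Theory Num.Theory.
Local Open Scope ring_scope.

Definition totally_indistinguishable (M N : nat) (sigma : ('I_M -> 'I_N) -> Prop) : Prop :=
  forall (x : 'I_M) (g : 'I_M -> 'I_N), sigma g ->
    exists g' : 'I_M -> 'I_N, [/\ sigma g', g' <> g & g' x = g x].

(* Operators on the Hilbert space with orthonormal basis indexed by a finite
   type T are given by their matrix entries W t s = <t| W |s>. *)
(* Standard oracle U_f on H_M (x) H_N:  U_f |x>|y> = |x>|y (+) f x>, (+) = addition mod N. *)
Definition oracle (C : nzRingType) (M N : nat) (f : 'I_M -> 'I_N)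
  : ('I_M * 'I_N) -> ('I_M * 'I_N) -> C :=
  fun r c => ((r.1 == c.1) && (val r.2 == (val c.2 + val (f c.1)) %% N)%N)%:R.

(* Apply W (x) 1_A to a vector psi of H (x) H_A, with dim H_A = d. *)
Definition apply_tens1 (C : nzRingType) (T : finType) (d : nat)
  (W : T -> T -> C) (psi : T * 'I_d -> C) : T * 'I_d -> C :=
  fun p => \sum_(s : T) W p.1 s * psi (s, p.2).

Definition lin_indep (C : nzRingType) (P : Type) (K : nat) (v : 'I_K -> P -> C) : Prop :=
  forall c : 'I_K -> C, (forall p, \sum_(j < K) c j * v j p = 0) -> forall j, c j = 0.

Definition unambiguously_distinguishable (R : rcfType) (T : finType) (K : nat)
  (W : 'I_K -> T -> T -> R[i]) : Prop :=
  exists (d : nat) (psi : T * 'I_d -> R[i]),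
    \sum_(p : T * 'I_d) `|psi p| ^+ 2 = 1 /\
    lin_indep (fun j => apply_tens1 (W j) psi).

Definition type1 (M N : nat) (f : 'I_4 -> 'I_M -> 'I_N) (x : 'I_M) : bool :=
  [&& f 0 x == f 1 x, f 1 x == f 2 x & f 2 x == f 3 x].
Definition type2 (M N : nat) (f : 'I_4 -> 'I_M -> 'I_N) (x : 'I_M) : bool :=
  [&& f 0 x == f 1 x, f 1 x != f 2 x & f 2 x == f 3 x].
Definition type3 (M N : nat) (f : 'I_4 -> 'I_M -> 'I_N) (x : 'I_M) : bool :=
  [&& f 0 x == f 2 x, f 2 x != f 1 x & f 1 x == f 3 x].
Definition type4 (M N : nat) (f : 'I_4 -> 'I_M -> 'I_N) (x : 'I_M) : bool :=
  [&& f 0 x == f 3 x, f 3 x != f 1 x & f 1 x == f 2 x].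

Definition Gamma (M N : nat) (f : 'I_4 -> 'I_M -> 'I_N) : 'M[int]_4 :=
  \matrix_(j', j) (#|[set x : 'I_M | f j' x == f j x]|)%:Z.

(* Main.v *)
Require Import Defs.
From HB Require Import structures.
From mathcomp Require Import all_boot all_order all_algebra.
From mathcomp Require Import complex.
From mathcomp Require Import reals.
From mathcomp Require Import ring.
Import Order.TTheory GRing.Theory Num.Theory.
Set Implicit Arguments. Unset Strict Implicit. Unset Printing Implicit Defensive.
Local Open Scope ring_scope.
Lemma minor_g (R : comRingType) n (g : nat -> nat -> R) (j : 'I_n.+1) :
  row' ord0 (col' j (\matrix_(i < n.+1, k < n.+1) g i k)) =
  \matrix_(i < n, k < n) g (bump 0 i) (bump j k).
Proof. by apply/matrixP => i k; rewrite !mxE. Qed.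

Lemma detSg (R : comRingType) n (g : nat -> nat -> R) :
  \det (\matrix_(i < n.+1, j < n.+1) g i j) =
  \sum_(j < n.+1) g 0%N j * ((-1) ^+ j * \det (\matrix_(i < n, k < n) g (bump 0 i) (bump j k))).
Proof.
rewrite (expand_det_row _ ord0); apply: eq_bigr => j _.
by rewrite /cofactor minor_g mxE add0n.
Qed.

Lemma det2g (R : comRingType) (g : nat -> nat -> R) :
  \det (\matrix_(i < 2, j < 2) g i j) = g 0 0 * g 1 1 - g 0 1 * g 1 0.
Proof.
rewrite detSg !big_ord_recl big_ord0 !det_mx11 !mxE /bump /=.
ring.
Qed.

Lemma det3g (R : comRingType) (g : nat -> nat -> R) :
  \det (\matrix_(i < 3, j < 3) g i j) =
  g 0 0 * (g 1 1 * g 2 2 - g 1 2 * g 2 1)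
  - g 0 1 * (g 1 0 * g 2 2 - g 1 2 * g 2 0)
  + g 0 2 * (g 1 0 * g 2 1 - g 1 1 * g 2 0).
Proof.
rewrite detSg !big_ord_recl big_ord0.
do 3 rewrite (@det2g _ (fun a b => g (bump 0 a) (bump _ b))).
rewrite /bump /=.
ring.
Qed.

Definition d3 (R : comRingType) (g : nat -> nat -> R) a b c :=
  g 1 a * (g 2 b * g 3 c - g 2 c * g 3 b)
  - g 1 b * (g 2 a * g 3 c - g 2 c * g 3 a)
  + g 1 c * (g 2 a * g 3 b - g 2 b * g 3 a).

Lemma det4g (R : comRingType) (g : nat -> nat -> R) :
  \det (\matrix_(i < 4, j < 4) g i j) =
  g 0 0 * d3 g 1 2 3 - g 0 1 * d3 g 0 2 3 + g 0 2 * d3 g 0 1 3 - g 0 3 * d3 g 0 1 2.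
Proof.
rewrite detSg !big_ord_recl big_ord0.
do 4 rewrite (@det3g _ (fun a b => g (bump 0 a) (bump _ b))).
rewrite /d3 /bump /=.
ring.
Qed.
Lemma ord4_cases (i : 'I_4) : [\/ i = 0, i = 1, i = 2 | i = 3].
Proof.
case: i => [[|[|[|[|//]]]] Hi].
- by constructor 1; apply: val_inj.
- by constructor 2; apply: val_inj.
- by constructor 3; apply: val_inj.
- by constructor 4; apply: val_inj.
Qed.

Lemma sum4 (K : nmodType) (F : 'I_4 -> K) :
  \sum_(j < 4) F j = F 0 + F 1 + F 2 + F 3.
Proof.
rewrite !big_ord_recl big_ord0 addr0 !addrA.
by congr (F _ + F _ + F _ + F _); apply: val_inj.
Qed.

Lemma card_setE (T : finType) (P : pred T) :
  #|[set x | P x]| = (\sum_x (P x : nat))%N.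
Proof.
rewrite -sum1_card big_mkcond /=; apply: eq_bigr => x _.
by rewrite inE; case: (P x).
Qed.

Lemma solve6 (K : numFieldType) (c : 'I_4 -> K) :
  c 0 + c 1 = 0 -> c 2 + c 3 = 0 -> c 0 + c 2 = 0 ->
  c 1 + c 3 = 0 -> c 0 + c 3 = 0 -> c 1 + c 2 = 0 -> forall j, c j = 0.
Proof.
move=> h01 h23 h02 h13 h03 h12.
have e1 : c 1 = - c 0 by apply/eqP; rewrite -addr_eq0 addrC h01.
have e2 : c 2 = - c 0 by apply/eqP; rewrite -addr_eq0 addrC h02.
have e3 : c 3 = - c 0 by apply/eqP; rewrite -addr_eq0 addrC h03.
have e0 : c 0 = 0.
  move: h23; rewrite e2 e3 -opprD => /eqP; rewrite oppr_eq0 -mulr2n.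
  by rewrite -mulr_natr mulf_eq0 pnatr_eq0 orbF => /eqP.
move=> j; case: (ord4_cases j) => ->; rewrite ?e1 ?e2 ?e3 e0 ?oppr0 //.
Qed.
Lemma core (T : eqType) (a0 a1 a2 a3 : T) :
 [|| a0 == a1, a0 == a2 | a0 == a3] -> [|| a1 == a0, a1 == a2 | a1 == a3] ->
 [|| a2 == a0, a2 == a1 | a2 == a3] -> [|| a3 == a0, a3 == a1 | a3 == a2] ->
 let t1 := [&& a0 == a1, a1 == a2 & a2 == a3] in
 let t2 := [&& a0 == a1, a1 != a2 & a2 == a3] in
 let t3 := [&& a0 == a2, a2 != a1 & a1 == a3] in
 let t4 := [&& a0 == a3, a3 != a1 & a1 == a2] in
 ((t1 + t2 + t3 + t4 = 1) /\
     (a0 == a1 : nat) = t1 + t2 /\ (a0 == a2 : nat) = t1 + t3 /\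
     (a0 == a3 : nat) = t1 + t4 /\ (a1 == a2 : nat) = t1 + t4 /\
     (a1 == a3 : nat) = t1 + t3 /\ (a2 == a3 : nat) = t1 + t2)%N.
Proof.
rewrite /=.
do ![case: eqP => /= [?|?]; subst]; move=> //; try congruence.
Qed.

Definition ty1 (T : eqType) (a : 'I_4 -> T) := [&& a 0 == a 1, a 1 == a 2 & a 2 == a 3].
Definition ty2 (T : eqType) (a : 'I_4 -> T) := [&& a 0 == a 1, a 1 != a 2 & a 2 == a 3].
Definition ty3 (T : eqType) (a : 'I_4 -> T) := [&& a 0 == a 2, a 2 != a 1 & a 1 == a 3].
Definition ty4 (T : eqType) (a : 'I_4 -> T) := [&& a 0 == a 3, a 3 != a 1 & a 1 == a 2].

Definition kx (i j : nat) : nat := ((odd i != odd j) + 2 * (odd i./2 != odd j./2))%N.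
Definition kl (t1 t2 t3 t4 : nat) (k : nat) : nat :=
  match k with 0 => t1+t2+t3+t4 | 1 => t1+t2 | 2 => t1+t3 | _ => t1+t4 end%N.

Lemma classA (T : eqType) (a : 'I_4 -> T) :
  (forall j, exists j', j' != j /\ a j' = a j) ->
  (ty1 a + ty2 a + ty3 a + ty4 a = 1)%N /\
  forall i j, (a i == a j : nat) = kl (ty1 a) (ty2 a) (ty3 a) (ty4 a) (kx i j).
Proof.
move=> H.
have P : forall j, exists2 j', j' != j & a j' == a j.
  by move=> j; case: (H j) => j' [? /eqP]; exists j'.
have H0 : [|| a 0 == a 1, a 0 == a 2 | a 0 == a 3].
  case: (P 0) => j'; case: (ord4_cases j') => -> //= _; rewrite eq_sym => ->; by rewrite ?orbT.
have H1 : [|| a 1 == a 0, a 1 == a 2 | a 1 == a 3].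
  case: (P 1) => j'; case: (ord4_cases j') => -> //= _; rewrite eq_sym => ->; by rewrite ?orbT.
have H2 : [|| a 2 == a 0, a 2 == a 1 | a 2 == a 3].
  case: (P 2) => j'; case: (ord4_cases j') => -> //= _; rewrite eq_sym => ->; by rewrite ?orbT.
have H3 : [|| a 3 == a 0, a 3 == a 1 | a 3 == a 2].
  case: (P 3) => j'; case: (ord4_cases j') => -> //= _; rewrite eq_sym => ->; by rewrite ?orbT.
have [S [E01 [E02 [E03 [E12 [E13 E23]]]]]] := core H0 H1 H2 H3.
split; first exact: S.
move=> i j; case: (ord4_cases i) => ->; case: (ord4_cases j) => ->;
  rewrite ?eqxx ?[a 1 == a 0]eq_sym ?[a 2 == a 0]eq_sym ?[a 3 == a 0]eq_sym
     ?[a 2 == a 1]eq_sym ?[a 3 == a 1]eq_sym ?[a 3 == a 2]eq_sym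
     ?E01 ?E02 ?E03 ?E12 ?E13 ?E23; by [|exact: (esym S)].
Qed.

Lemma nt_gen (T : eqType) (K : comRingType) (a : 'I_4 -> T) (F : 'I_4 -> K) :
  (forall i j, a i = a j -> F i = F j) -> (ty1 a + ty2 a + ty3 a + ty4 a = 1)%N ->
  [/\ ty2 a = false -> F 0 + F 1 - F 2 - F 3 = 0,
      ty3 a = false -> F 0 - F 1 + F 2 - F 3 = 0 &
      ty4 a = false -> F 0 - F 1 - F 2 + F 3 = 0].
Proof.
move=> HF S.
case h1: (ty1 a).
  move: h1 => /and3P [/eqP e01 /eqP e12 /eqP e23].
  rewrite (HF 1 0) ?(HF 2 0) ?(HF 3 0) //; try congruence.
  by split => _; ring.
case h2: (ty2 a).
  move: h2 => /and3P [/eqP e01 _ /eqP e23].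
  rewrite (HF 1 0) ?(HF 3 2) //; try congruence.
  by split => // _; ring.
case h3: (ty3 a).
  move: h3 => /and3P [/eqP e02 _ /eqP e13].
  rewrite (HF 2 0) ?(HF 3 1) //; try congruence.
  by split => // _; ring.
case h4: (ty4 a).
  move: h4 => /and3P [/eqP e03 _ /eqP e12].
  rewrite (HF 3 0) ?(HF 2 1) //; try congruence.
  by split => // _; ring.
by move: S; rewrite h1 h2 h3 h4.
Qed.
Lemma det_kl (n1 n2 n3 n4 : nat) :
  \det (\matrix_(i < 4, j < 4) (kl n1 n2 n3 n4 (kx i j))%:Z) =
  16%:Z * (n1+n2+n3+n4 + n1)%:Z * n2%:Z * n3%:Z * n4%:Z.
Proof.
rewrite (@det4g _ (fun i j => (kl n1 n2 n3 n4 (kx i j))%:Z)) /d3 /kx /kl /=.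
rewrite !PoszD.
ring.
Qed.

Unset Implicit Arguments.

Theorem mainTheorem11 (R : realType) (M N : nat) (hM : (3 <= M)%N) (hN : (1 <= N)%N)
  (f : 'I_4 -> 'I_M -> 'I_N)
  (hdist : injective f)
  (hTI : totally_indistinguishable (fun g => exists j, g = f j)) :
  (forall x : 'I_M,
     (type1 f x + type2 f x + type3 f x + type4 f x = 1)%N) /\
  (let N1 := #|[set x | type1 f x]| in
   let N2 := #|[set x | type2 f x]| in
   let N3 := #|[set x | type3 f x]| in
   let N4 := #|[set x | type4 f x]| in
   \det (Gamma f) = 16%:Z * (M + N1)%:Z * N2%:Z * N3%:Z * N4%:Z /\
   (unambiguously_distinguishable (R := R) (fun j => @oracle R[i] M N (f j))
      <-> [/\ (0 < N2)%N, (0 < N3)%N & (0 < N4)%N])).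
Proof.
case: N hN f hdist hTI => [//|n] _ f hdist hTI.
have partner : forall x (j : 'I_4), exists j', j' != j /\ f j' x = f j x.
  move=> x j; case: (hTI x (f j) (ex_intro _ j erefl)) => g [[j' ->] ne e].
  exists j'; split => //; apply/eqP => ej; apply: ne; by rewrite ej.
have cl : forall x, (type1 f x + type2 f x + type3 f x + type4 f x = 1)%N /\
   forall i j, (f i x == f j x : nat) =
     kl (type1 f x) (type2 f x) (type3 f x) (type4 f x) (kx i j).
  by move=> x; exact: (classA (a := fun j => f j x) (partner x)).
split; first by move=> x; case: (cl x).
cbv zeta.
split.
  have HG : Gamma f = \matrix_(i < 4, j < 4) (kl #|[set x | type1 f x]|
      #|[set x | type2 f x]| #|[set x | type3 f x]| #|[set x | type4 f x]| (kx i j))%:Z.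
    apply/matrixP => i j; rewrite !mxE !card_setE.
    rewrite (eq_bigr _ (fun x _ => (cl x).2 i j)).
    by case: (kx i j) => [|[|[|k]]] /=; rewrite ?big_split.
  have HM : (#|[set x | type1 f x]| + #|[set x | type2 f x]| + #|[set x | type3 f x]|
      + #|[set x | type4 f x]| = M)%N.
    rewrite !card_setE -!big_split /= (eq_bigr _ (fun x _ => (cl x).1)).
    by rewrite sum_nat_const card_ord muln1.
  by rewrite HG det_kl HM.
split.
  case=> d [psi [_ Hli]].
  have key : forall (c : 'I_4 -> R[i]), c 0 = 1 ->
      (forall r s, \sum_(j < 4) c j * oracle R[i] (f j) r s = 0) -> False.
    move=> c c0 Hc.
    have H0 : c 0 = 0.
      apply: (Hli c) => p /=; rewrite /apply_tens1.
      under eq_bigr => j _ do rewrite big_distrr /=.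
      rewrite exchange_big /=; apply: big1 => s _.
      under eq_bigr => j _ do rewrite mulrA.
      by rewrite -big_distrl /= Hc mul0r.
    by move/eqP: H0; rewrite c0 oner_eq0.
  have HF : forall r s i j, f i s.1 = f j s.1 ->
      oracle R[i] (f i) r s = oracle R[i] (f j) r s.
    by move=> r s i j e; rewrite /oracle e.
  have tf : forall (P : 'I_M -> bool), #|[set x | P x]| = 0%N -> forall x, P x = false.
    move=> P H x; apply/negP => Px.
    have : (0 < #|[set x | P x]|)%N by apply/card_gt0P; exists x; rewrite inE.
    by rewrite H.
  have NT := fun r s => nt_gen (a := fun j => f j s.1)
     (F := fun j => oracle R[i] (f j) r s) (HF r s) (cl s.1).1.
  split; rewrite lt0n; apply/negP => /eqP H0.
  - apply: (key (fun j => if j == 0 then 1 else if j == 1 then 1 else -1)) => // r s.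
    rewrite sum4 /= !mul1r !mulN1r.
    by case: (NT r s) => A _ _; apply: A; apply: tf H0 s.1.
  - apply: (key (fun j => if j == 0 then 1 else if j == 2 then 1 else -1)) => // r s.
    rewrite sum4 /= !mul1r !mulN1r.
    by case: (NT r s) => _ A _; apply: A; apply: tf H0 s.1.
  - apply: (key (fun j => if j == 0 then 1 else if j == 3 then 1 else -1)) => // r s.
    rewrite sum4 /= !mul1r !mulN1r.
    by case: (NT r s) => _ _ A; apply: A; apply: tf H0 s.1.
case=> /card_gt0P [x2]; rewrite inE => h2 /card_gt0P [x3]; rewrite inE => h3.
case/card_gt0P => x4; rewrite inE => h4.
have d23 : x3 != x2.
  apply/eqP => e; subst x3; have := (cl x2).1; rewrite h2 h3.
  by case: (type1 f x2); case: (type4 f x2).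
have d24 : x4 != x2.
  apply/eqP => e; subst x4; have := (cl x2).1; rewrite h2 h4.
  by case: (type1 f x2); case: (type3 f x2).
have d34 : x4 != x3.
  apply/eqP => e; subst x4; have := (cl x3).1; rewrite h3 h4.
  by case: (type1 f x3); case: (type2 f x3).
pose w (x : 'I_M) : R[i] :=
  if x == x2 then 2%:R / 3%:R else if x == x3 then 2%:R / 3%:R
  else if x == x4 then 1 / 3%:R else 0.
pose psi (p : ('I_M * 'I_n.+1) * 'I_1) : R[i] := if p.1.2 == ord0 then w p.1.1 else 0.
have neq : forall a b : 'I_M, a != b ->
    ((a, ord0), ord0) != ((b, ord0), ord0) :> ('I_M * 'I_n.+1) * 'I_1.
  by move=> a b nab; apply/eqP => -[e]; rewrite e eqxx in nab.
exists 1%N, psi; split.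
  rewrite (bigD1 ((x2, ord0), ord0)) // (bigD1 ((x3, ord0), ord0)) /=; last by rewrite neq.
  rewrite (bigD1 ((x4, ord0), ord0)) /=; last by rewrite !neq.
  rewrite big1 ?addr0.
    rewrite /psi /w /= !eqxx (negbTE d23) (negbTE d24) (negbTE d34).
    rewrite !ger0_norm ?divr_ge0 ?ler0n //.
    by field.
  move=> [[x y] k] /andP [/andP [n2 n3] n4].
  rewrite /psi /=; case: (eqVneq y ord0) => [ey|ny]; last first.
    by rewrite normr0 expr2 mulr0.
  subst y; rewrite (ord1 k) in n2 n3 n4 *.
  have nx2 : x != x2 by apply: contra n2 => /eqP ->.
  have nx3 : x != x3 by apply: contra n3 => /eqP ->.
  have nx4 : x != x4 by apply: contra n4 => /eqP ->.
  by rewrite /w (negbTE nx2) (negbTE nx3) (negbTE nx4) normr0 expr2 mulr0.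
move=> c Hc.
have Hv : forall j x y k, apply_tens1 (oracle R[i] (f j)) psi ((x, y), k) =
    w x * (y == f j x)%:R.
  move=> j x y k; rewrite /apply_tens1 (bigD1 (x, ord0)) //= big1 ?addr0.
    rewrite /oracle /psi /= eqxx add0n modn_small ?ltn_ord // val_eqE mulrC.
    by [].
  move=> [x' y'] /= ne; rewrite /oracle /psi /=.
  case: (eqVneq x x') => [ex|nx]; last by rewrite mul0r.
  subst x'; case: (eqVneq y' ord0) => [ey|ny]; first by rewrite ey eqxx in ne.
  by rewrite mulr0.
have Hp : forall x y, \sum_(j < 4) c j * (w x * (y == f j x)%:R) = 0.
  move=> x y; rewrite -[RHS](Hc ((x, y), ord0)); apply: eq_bigr => j _; by rewrite Hv.
have w2 : w x2 != 0 by rewrite /w eqxx mulf_neq0 ?invr_eq0 ?pnatr_eq0.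
have w3 : w x3 != 0 by rewrite /w eqxx (negbTE d23) mulf_neq0 ?invr_eq0 ?pnatr_eq0.
have w4 : w x4 != 0.
  by rewrite /w eqxx (negbTE d24) (negbTE d34) mulf_neq0 ?invr_eq0 ?pnatr_eq0 ?oner_eq0.
have fin : forall x (a b : R[i]), w x != 0 -> a * w x + b * w x = 0 -> a + b = 0.
  by move=> x a b wn /eqP; rewrite -mulrDl mulf_eq0 (negbTE wn) orbF => /eqP.
case/and3P: h2 => /eqP a01 n12 /eqP a23.
case/and3P: h3 => /eqP a02 n21 /eqP a13.
case/and3P: h4 => /eqP a03 n31 /eqP a12.
have e01 : c 0 + c 1 = 0.
  apply: (fin x2) => //; have := Hp x2 (f 1 x2); rewrite sum4 a01 -a23 !eqxx (negbTE n12) /=.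
  by rewrite ?mulr1n ?mulr0n ?mulr1 ?mulr0 ?addr0 ?add0r.
have e23 : c 2 + c 3 = 0.
  apply: (fin x2) => //; have := Hp x2 (f 2 x2); rewrite sum4 a01 -a23 !eqxx eq_sym (negbTE n12) /=.
  by rewrite ?mulr1n ?mulr0n ?mulr1 ?mulr0 ?addr0 ?add0r.
have e02 : c 0 + c 2 = 0.
  apply: (fin x3) => //; have := Hp x3 (f 2 x3); rewrite sum4 a02 -a13 !eqxx (negbTE n21) /=.
  by rewrite ?mulr1n ?mulr0n ?mulr1 ?mulr0 ?addr0 ?add0r.
have e13 : c 1 + c 3 = 0.
  apply: (fin x3) => //; have := Hp x3 (f 1 x3); rewrite sum4 a02 -a13 !eqxx eq_sym (negbTE n21) /=.
  by rewrite ?mulr1n ?mulr0n ?mulr1 ?mulr0 ?addr0 ?add0r.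
have e03 : c 0 + c 3 = 0.
  apply: (fin x4) => //; have := Hp x4 (f 3 x4); rewrite sum4 a03 -a12 !eqxx (negbTE n31) /=.
  by rewrite ?mulr1n ?mulr0n ?mulr1 ?mulr0 ?addr0 ?add0r.
have e12 : c 1 + c 2 = 0.
  apply: (fin x4) => //; have := Hp x4 (f 1 x4); rewrite sum4 a03 -a12 !eqxx eq_sym (negbTE n31) /=.
  by rewrite ?mulr1n ?mulr0n ?mulr1 ?mulr0 ?addr0 ?add0r.
exact: solve6.
Qed.
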